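(* Let $p$ be a prime, $n\ge2$, let $F,G:\mathbb{F}_p^n\to\mathbb{F}_p^n$ and let $\mathcal{E}=\{e_1,\dots,e_n\}$ be a basis of $\mathbb{F}_p^n$ over $\mathbb{F}_p$ with coordinates $x_1,\dots,x_n$ relative to $\mathcal{E}$. Then \[\Delta_{e_1}F(x_1,\dots,x_n)=\Delta_{e_2}G(x_1,\dots,x_n)\quad\text{for all }(x_1,\dots,x_n)\in\mathbb{F}_p^n\] if and only if for every nonzero $\mu\in\mathbb{F}_p^n$, writing the algebraic normal forms \[\mu\cdot F=\sum_{(i_1,\dots,i_n)}f^{(\mu)}_{(i_1,\dots,i_n)}\prod_{j=1}^nx_j^{i_j},\qquad \mu\cdot G=\sum_{(i_1,\dots,i_n)}g^{(\mu)}_{(i_1,\dots,i_n)}\prod_{j=1}^nx_j^{i_j},\] the coefficients satisfy \[\sum_{k=i_1+1}^{p-1}\binom{k}{k-i_1}f^{(\mu)}_{(k,i_2,i_3,\dots,i_n)}=\sum_{k=i_2+1}^{p-1}\binom{k}{k-i_2}g^{(\mu)}_{(i_1,k,i_3,\dots,i_n)}\] for all $i_1,i_2\in\{0,\dots,p-2\}$ and $(i_3,\dots,i_n)\in\{0,\dots,p-1\}^{n-2}$, and \[\sum_{k=j+1}^{p-1}\binom{k}{k-j}f^{(\mu)}_{(k,p-1,i_3,\dots,i_n)}=\sum_{k=j+1}^{p-1}\binom{k}{k-j}g^{(\mu)}_{(p-1,k,i_3,\dots,i_n)}=0\] for all $j\in\{0,\dots,p-2\}$ and $(i_3,\dots,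i_n)\in\{0,\dots,p-1\}^{n-2}$.
   Context: $\Delta_aF(x)=F(x+a)-F(x)$ for $a\in\mathbb{F}_p^n$. Writing $x=\sum_jx_je_j$, every function $h:\mathbb{F}_p^n\to\mathbb{F}_p$ has a unique algebraic normal form $h=\sum_{(i_1,\dots,i_n)\in\{0,\dots,p-1\}^n}h_{(i_1,\dots,i_n)}\prod_jx_j^{i_j}$ with coefficients in $\mathbb{F}_p$. For $\mu\in\mathbb{F}_p^n$, $\mu\cdot F$ denotes the component function $x\mapsto\sum_{k=1}^n\mu_kF_k(x)$ where $F=(F_1,\dots,F_n)$ (similarly for $G$). Binomial coefficients are taken modulo $p$ and all equalities are in $\mathbb{F}_p$. *)

(* Defs.v *)
From HB Require Import structures.
From mathcomp Require Import all_boot all_order all_algebra all_fingroup.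
Set Implicit Arguments. Unset Strict Implicit. Unset Printing Implicit Defensive.
Import GRing.Theory.
Local Open Scope ring_scope.

(* The coordinate indices 1 and 2 of the paper (0 and 1 here), given n >= 2. *)
Definition ix0 (n : nat) (hn : (1 < n)%N) : 'I_n := Ordinal (ltnW hn).
Definition ix1 (n : nat) (hn : (1 < n)%N) : 'I_n := Ordinal hn.

Definition expo (n p : nat) := {ffun 'I_n -> 'I_p}.

Definition upd (n p : nat) (t : expo n p) (j : 'I_n) (k : 'I_p) : expo n p :=
  [ffun l => if l == j then k else t l].

Definition comp_fun (p n : nat) (mu : 'rV['F_p]_n)
    (F : 'rV['F_p]_n -> 'rV['F_p]_n) (x : 'rV['F_p]_n) : 'F_p :=
  \sum_(k < n) mu 0 k * F x 0 k.

Definition monom (p n : nat) (i : expo n p) (c : 'rV['F_p]_n) : 'F_p :=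
  \prod_(j < n) c 0 j ^+ i j.

(* a is an algebraic normal form of h w.r.t. the basis given by the rows of E
   (e_j = row j E, so the point with coordinates c is c *m E). *)
Definition is_anf (p n : nat) (E : 'M['F_p]_n) (h : 'rV['F_p]_n -> 'F_p)
    (a : {ffun expo n p -> 'F_p}) : bool :=
  [forall c : 'rV['F_p]_n, h (c *m E) == \sum_(i : expo n p) a i * monom i c].

(* The (unique, for a basis E and p prime) ANF coefficient function. *)
Definition anf (p n : nat) (E : 'M['F_p]_n) (h : 'rV['F_p]_n -> 'F_p)
    : {ffun expo n p -> 'F_p} :=
  odflt [ffun => 0] [pick a | is_anf E h a].

Definition Delta (p n : nat) (a : 'rV['F_p]_n)
    (F : 'rV['F_p]_n -> 'rV['F_p]_n) (x : 'rV['F_p]_n) : 'rV['F_p]_n :=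
  F (x + a) - F x.

(* Main.v *)
Require Import Defs.
From HB Require Import structures.
From mathcomp Require Import all_boot all_order all_algebra all_fingroup.
From mathcomp Require Import finfield zify.
Set Implicit Arguments. Unset Strict Implicit. Unset Printing Implicit Defensive.
Import GRing.Theory.
Local Open Scope ring_scope.

Lemma upd_id (n p : nat) (t : expo n p) j k : upd t j k j = k.
Proof. by rewrite /upd ffunE eqxx. Qed.
Lemma upd_ne (n p : nat) (t : expo n p) j k l : l != j -> upd t j k l = t l.
Proof. by move=> h; rewrite /upd ffunE (negbTE h). Qed.
Lemma upd_upd (n p : nat) (t : expo n p) j k k' : upd (upd t j k) j k' = upd t j k'.
Proof. by apply/ffunP=> l; rewrite /upd !ffunE; case: (l == j). Qed.
Lemma upd_same (n p : nat) (t : expo n p) j : upd t j (t j) = t.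
Proof. by apply/ffunP=> l; rewrite /upd !ffunE; case: eqP => // ->. Qed.

Lemma uni_shift (R : comNzRingType) (p K : nat) (x : R) : (K <= p)%N ->
  (x + 1) ^+ K - x ^+ K = \sum_(m < p | (m < K)%N) ('C(K, m))%:R * x ^+ m.
Proof.
move=> hK; rewrite exprD1n big_ord_recr /= binn mulr1n addrK.
under eq_bigr do rewrite -mulr_natl.
exact: (big_ord_widen _ (fun m => ('C(K, m))%:R * x ^+ m) hK).
Qed.

Lemma monom_shift (p n : nat) (j : 'I_n) (i : expo n p) (c : 'rV['F_p]_n) :
  monom i (c + delta_mx 0 j) - monom i c =
  \sum_(m < p | (m < i j)%N) ('C(i j, m))%:R * monom (upd i j m) c.
Proof.
rewrite /monom (bigD1 j) //= [X in _ - X](bigD1 j) //=.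
have E1 : \prod_(l < n | l != j) (c + delta_mx 0 j) 0 l ^+ i l
        = \prod_(l < n | l != j) c 0 l ^+ i l.
  by apply: eq_bigr => l hl; rewrite !mxE eqxx /= (negbTE hl) addr0.
rewrite E1 !mxE !eqxx /= -mulrBl (uni_shift (p:=p)); last exact: ltnW.
rewrite mulr_suml; apply: eq_bigr => m _.
rewrite [in RHS](bigD1 j) //= upd_id -mulrA; congr (_ * (_ * _)).
by apply: eq_bigr => l hl; rewrite upd_ne.
Qed.

Definition Phi (p n : nat) (a : {ffun expo n p -> 'F_p}) (c : 'rV['F_p]_n) : 'F_p :=
  \sum_(i : expo n p) a i * monom i c.

Definition Dop (p n : nat) (j : 'I_n) (a : {ffun expo n p -> 'F_p}) : {ffun expo n p -> 'F_p} :=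
  [ffun t : expo n p => \sum_(k : 'I_p | (t j < k)%N) ('C(k, k - t j))%:R * a (upd t j k)].

Definition sig (p n : nat) (j : 'I_n) (u : expo n p * 'I_p) : expo n p * 'I_p :=
  (upd u.1 j u.2, u.1 j).

Lemma sigK (p n : nat) (j : 'I_n) : involutive (@sig p n j).
Proof. by case=> i m; rewrite /sig /= upd_upd upd_id upd_same. Qed.

Lemma Phi_shift (p n : nat) (j : 'I_n) (a : {ffun expo n p -> 'F_p}) c :
  Phi a (c + delta_mx 0 j) - Phi a c = Phi (Dop j a) c.
Proof.
rewrite /Phi -sumrB.
under eq_bigr do rewrite -mulrBr monom_shift mulr_sumr.
under [RHS]eq_bigr do rewrite ffunE mulr_suml.
rewrite (pair_big_dep xpredT (fun (i : expo n p) (m : 'I_p) => (m < i j)%N)) /=.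
rewrite (pair_big_dep xpredT (fun (t : expo n p) (k : 'I_p) => (t j < k)%N)) /=.
rewrite (reindex_inj (inv_inj (@sigK p n j))) /=.
apply: eq_big => [[i m]|[i m]] /=; rewrite /sig /= upd_id //.
move=> hm; rewrite upd_upd upd_same bin_sub; last exact: ltnW.
by rewrite mulrCA mulrA.
Qed.

Lemma Fp_eq (p : nat) (hp : prime p) (x y : 'F_p) :
  (x == y)%:R = 1 - (x - y) ^+ p.-1.
Proof.
have hp1 := prime_gt1 hp.
case: eqP => [->|/eqP h].
  by rewrite subrr expr0n; case: (p.-1 =P 0)%N => [|_]; [lia | rewrite subr0].
have hz : x - y != 0 by rewrite subr_eq0.
have E : (x - y) ^+ (p.-1).+1 = x - y.
  by rewrite prednK ?prime_gt0 // -[X in _ ^+ X = _](card_Fp hp) expf_card.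
have E2 : (x - y) ^+ p.-1 * (x - y) = 1 * (x - y) by rewrite mul1r -exprSr.
rewrite (mulIf hz E2).
by rewrite subrr.
Qed.

Definition alpha (p : nat) (y : 'F_p) (k : 'I_p) : 'F_p :=
  (1 - ('X - y%:P) ^+ p.-1)`_k.

Lemma alphaP (p : nat) (hp : prime p) (x y : 'F_p) :
  (x == y)%:R = \sum_(k < p) alpha y k * x ^+ k.
Proof.
rewrite Fp_eq // /alpha -horner_coef_wide; first by rewrite !hornerE.
apply: leq_trans (size_polyD _ _) _; rewrite geq_max size_polyN size_poly1 prime_gt0 //=.
apply: leq_trans (size_poly_exp_leq _ _) _.
by rewrite size_XsubC mul1n prednK // prime_gt0.
Qed.

Lemma ind_Phi (p n : nat) (hp : prime p) (b c : 'rV['F_p]_n) :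
  (c == b)%:R = Phi [ffun i : expo n p => \prod_j alpha (b 0 j) (i j)] c.
Proof.
have -> : (c == b)%:R = \prod_j (c 0 j == b 0 j)%:R :> 'F_p.
  case: eqP => [->|hne]; first by rewrite big1 // => j _; rewrite eqxx.
  case: (pickP (fun j => c 0 j != b 0 j)) => [j hj | H].
    by rewrite (bigD1 j) //= (negbTE hj) mul0r.
  by exfalso; apply: hne; apply/rowP => j; apply/eqP; move: (H j) => /= /negbFE.
under eq_bigr do rewrite (alphaP hp).
rewrite bigA_distr_bigA /Phi; apply: eq_bigr => i _.
by rewrite ffunE /monom -big_split.
Qed.

Lemma Phi_exists (p n : nat) (hp : prime p) (h : 'rV['F_p]_n -> 'F_p) :
  exists a, forall c, h c = Phi a c.
Proof.
exists [ffun i : expo n p => \sum_b h b * \prod_j alpha (b 0 j) (i j)] => c.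
have -> : h c = \sum_b h b * (c == b)%:R.
  rewrite (bigD1 c) //= eqxx mulr1 big1 ?addr0 // => b hb.
  by rewrite eq_sym (negbTE hb) mulr0.
under eq_bigr do rewrite (ind_Phi hp) /Phi mulr_sumr.
rewrite exchange_big; apply: eq_bigr => i _.
rewrite ffunE mulr_suml; apply: eq_bigr => b _.
by rewrite ffunE mulrA.
Qed.

Lemma Phi_inj (p n : nat) (hp : prime p) (a b : {ffun expo n p -> 'F_p}) :
  (forall c, Phi a c = Phi b c) -> a = b.
Proof.
move=> H.
pose f := fun a : {ffun expo n p -> 'F_p} => [ffun c : 'rV['F_p]_n => Phi a c].
have onto : forall y, y \in codom f.
  move=> y; have [a' ha'] := Phi_exists hp (fun c => y c).
  have -> : y = f a' by apply/ffunP => c; rewrite ffunE ha'.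
  exact: codom_f.
have finj : {in predT &, injective f}.
  apply/image_injP.
  have -> : #|image f predT| = #|{: {ffun 'rV['F_p]_n -> 'F_p}}|.
    by apply: eq_card => y; rewrite onto.
  have -> : #|@predT {ffun expo n p -> 'F_p}| = #|{: {ffun expo n p -> 'F_p}}|.
    by apply: eq_card.
  have hX : (Zp_trunc (pdiv p)).+2 = p by rewrite -[RHS](card_Fp hp) card_ord.
  by rewrite !card_ffun card_mx !card_ord mul1n hX.
apply: finj => //; apply/ffunP => c; by rewrite !ffunE H.
Qed.

Lemma anfP (p n : nat) (hp : prime p) (E : 'M['F_p]_n) (h : 'rV['F_p]_n -> 'F_p) c :
  h (c *m E) = Phi (anf E h) c.
Proof.
rewrite /anf; case: pickP => [a /forallP ha | H].
  by rewrite /= (eqP (ha c)).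
exfalso; have [a ha] := Phi_exists hp (fun c => h (c *m E)).
move: (H a); rewrite /is_anf.
have -> // : [forall c, h (c *m E) == \sum_(i : expo n p) a i * monom i c].
by apply/forallP => c'; rewrite ha.
Qed.

Lemma compD (p n : nat) (mu : 'rV['F_p]_n) (H : 'rV['F_p]_n -> 'rV['F_p]_n) e x :
  comp_fun mu (Delta e H) x = comp_fun mu H (x + e) - comp_fun mu H x.
Proof. rewrite /comp_fun /Delta -sumrB; apply: eq_bigr => k _; by rewrite !mxE mulrBr. Qed.

Lemma comp_delta (p n : nat) (k : 'I_n) (H : 'rV['F_p]_n -> 'rV['F_p]_n) x :
  comp_fun (delta_mx 0 k) H x = H x 0 k.
Proof.
rewrite /comp_fun (bigD1 k) //= big1 ?addr0; first by rewrite mxE !eqxx mul1r.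
by move=> l hl; rewrite mxE (negbTE hl) andbF mul0r.
Qed.

Lemma sum_empty (p n : nat) (t : expo n p) j (Fk : 'I_p -> 'F_p) :
  nat_of_ord (t j) = p.-1 -> \sum_(k : 'I_p | (t j < k)%N) Fk k = 0.
Proof.
move=> h; rewrite big_pred0 // => k; apply/negbTE; rewrite -leqNgt.
have := ltn_ord k; lia.
Qed.

Theorem theorem3 (p n : nat) (hp : prime p) (hn : (1 < n)%N)
    (F G : 'rV['F_p]_n -> 'rV['F_p]_n) (E : 'M['F_p]_n) (hE : E \in unitmx) :
  (forall x : 'rV['F_p]_n,
      Delta (row (ix0 hn) E) F x = Delta (row (ix1 hn) E) G x)
  <->
  (forall mu : 'rV['F_p]_n, mu != 0 ->
    let f := anf E (comp_fun mu F) in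
    let g := anf E (comp_fun mu G) in
    (forall t : expo n p,
       (t (ix0 hn) < p.-1)%N -> (t (ix1 hn) < p.-1)%N ->
       \sum_(k : 'I_p | (t (ix0 hn) < k)%N)
           ('C(k, k - t (ix0 hn)))%:R * f (upd t (ix0 hn) k)
       = \sum_(k : 'I_p | (t (ix1 hn) < k)%N)
           ('C(k, k - t (ix1 hn)))%:R * g (upd t (ix1 hn) k))
    /\
    (forall (j : 'I_p) (t : expo n p), (j < p.-1)%N ->
       nat_of_ord (t (ix1 hn)) = p.-1 ->
       \sum_(k : 'I_p | (j < k)%N) ('C(k, k - j))%:R * f (upd t (ix0 hn) k) = 0)
    /\
    (forall (j : 'I_p) (t : expo n p), (j < p.-1)%N ->
       nat_of_ord (t (ix0 hn)) = p.-1 ->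
       \sum_(k : 'I_p | (j < k)%N) ('C(k, k - j))%:R * g (upd t (ix1 hn) k) = 0)).
Proof.
set e0 := ix0 hn; set e1 := ix1 hn.
have ne : e1 != e0.
  by apply/negP => /eqP /(congr1 (@nat_of_ord n)).
have ne' : e0 != e1 by rewrite eq_sym.
have key : forall (mu : 'rV['F_p]_n) (H : 'rV['F_p]_n -> 'rV['F_p]_n) j c,
    comp_fun mu (Delta (row j E) H) (c *m E) = Phi (Dop j (anf E (comp_fun mu H))) c.
  by move=> mu H j c; rewrite compD rowE -mulmxDl -Phi_shift !(anfP hp).
split.
- move=> HD mu hmu; cbv zeta.
  have EQ : Dop e0 (anf E (comp_fun mu F)) = Dop e1 (anf E (comp_fun mu G)).
    by apply: (Phi_inj hp) => c; rewrite -!key /comp_fun HD.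
  split; [|split].
  + by move=> t h0 h1; have := congr1 (fun a : {ffun expo n p -> 'F_p} => a t) EQ; rewrite /Dop !ffunE.
  + move=> j t hj ht; have := congr1 (fun a : {ffun expo n p -> 'F_p} => a (upd t e0 j)) EQ.
    rewrite /Dop !ffunE eqxx (negbTE ne) (sum_empty _ ht).
    by under eq_bigr do rewrite upd_upd.
  + move=> j t hj ht; have := congr1 (fun a : {ffun expo n p -> 'F_p} => a (upd t e1 j)) EQ.
    rewrite /Dop !ffunE eqxx (negbTE ne') (sum_empty _ ht).
    by under eq_bigr do rewrite upd_upd; move/esym.
- move=> HC x; rewrite -(mulmxKV hE x); move: (x *m invmx E) => c.
  apply/rowP => k.
  rewrite -(comp_delta k (Delta (row e0 E) F)) -(comp_delta k (Delta (row e1 E) G)) !key.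
  have hmu : delta_mx 0 k != 0 :> 'rV['F_p]_n.
    apply/eqP => /matrixP /(_ 0 k); rewrite !mxE !eqxx /= => /eqP.
    by rewrite oner_eq0.
  move: (HC _ hmu); cbv zeta => [[H1 [H2 H3]]].
  congr Phi; apply/ffunP => t; rewrite /Dop !ffunE.
  have := ltn_ord (t e0); have := ltn_ord (t e1).
  case: (ltnP (t e0) p.-1) => h0; case: (ltnP (t e1) p.-1) => h1 l1 l0.
  + exact: H1.
  + have ht1 : nat_of_ord (t e1) = p.-1 by lia.
    by rewrite (sum_empty _ ht1); exact: H2.
  + have ht0 : nat_of_ord (t e0) = p.-1 by lia.
    by rewrite (sum_empty _ ht0); symmetry; exact: H3.
  + have ht1 : nat_of_ord (t e1) = p.-1 by lia.
    have ht0 : nat_of_ord (t e0) = p.-1 by lia.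
    by rewrite (sum_empty _ ht1) (sum_empty _ ht0).
Qed.
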